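(* Let $\phi:\mathcal S\times\mathcal A\times[0,1]\to\mathbb R$ be bounded and such that $\mathcal Q_\phi$ is well defined, and set $\overline\phi=\sup_{s,a,\tau}\phi(s,a,\tau)$, $\underline\phi=\inf_{s,a,\tau}\phi(s,a,\tau)$. Let $F_\infty^{-1}(\cdot;s,a)$ and $\underline F_\infty^{-1}(\cdot;s,a)$ be the quantile functions of the fixed points of $\mathcal T^\pi$ and of $\mathcal Q_\phi\mathcal T^\pi$, respectively. Then for all $(s,a)$ and $\tau$, $$F_\infty^{-1}(\tau;s,a)-\phi(s,a,\tau)-\frac{\gamma}{1-\gamma}\overline\phi\ \le\ \underline F^{-1}_\infty(\tau;s,a)\ \le\ F_\infty^{-1}(\tau;s,a)-\phi(s,a,\tau)-\frac{\gamma}{1-\gamma}\underline\phi.$$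
   Context: Setting: an infinite-horizon discounted MDP with finite state set $\mathcal S$, finite action set $\mathcal A$, transition kernel $\mathcal P(\cdot\mid s,a)$, bounded reward distributions $\mathcal R(s,a)$ on $\mathbb R$, discount $\gamma\in(0,1)$, and a policy $\pi$. For a distribution $\nu$ on $\mathbb R$, $F_\nu$ is its CDF and $F_\nu^{-1}(\tau)=\inf\{x:\tau\le F_\nu(x)\}$ its quantile function. The distributional Bellman operator on $\eta\in\mathscr P(\mathbb R)^{\mathcal S\times\mathcal A}$ is defined by $F_{\mathcal T^\pi\eta(s,a)}(z)=\sum_{s',a'}\mathcal P(s'\mid s,a)\pi(a'\mid s')\int F_{\eta(s',a')}\big(\tfrac{z-r}{\gamma}\big)\,dF_{\mathcal R(s,a)}(r)$. Quantile distortion operator: $\mathcal Q_\phi\eta$ is defined by $F^{-1}_{\mathcal Q_\phi\eta(s,a)}(\tau)=F^{-1}_{\eta(s,a)}(\tau)-\phi(s,a,\tau)$ (with $\phi$ such that this is again a quantile function). Both $\mathcal T^\pi$ and $\mathcal Q_\phi\mathcal T^\pi$ are $\gamma$-contractions in the supremum Wasserstein metric $\bar w_p(\eta,\eta')=\sup_{(s,a)}w_p(\eta(s,a),\eta'(s,a))$ on distributions with bounded support, so they have unique fixed points. *)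

(* Defs.v *)
From HB Require Import structures.
From mathcomp Require Import all_boot all_order all_algebra.
From mathcomp Require Import all_classical all_reals all_analysis.
Set Implicit Arguments. Unset Strict Implicit. Unset Printing Implicit Defensive.
Import Order.TTheory GRing.Theory Num.Theory.
Local Open Scope classical_set_scope.
Local Open Scope ring_scope.

Notation distr R := (probability R R).

Definition cdfR (R : realType) (nu : distr R) (x : R) : R :=
  fine (nu [set` `]-oo, x]]).

Definition quantile (R : realType) (F : R -> R) (tau : R) : R :=
  inf [set x | tau <= F x].

Definition bounded_support (R : realType) (nu : distr R) : Prop :=
  exists M : R, nu [set` `[- M, M]] = 1%E.

Definition bellman_cdf (R : realType) (S A : finType)
  (P : S -> A -> S -> R) (Rw : S -> A -> distr R) (gamma : R)
  (pi : S -> A -> R) (eta : S -> A -> distr R) (s : S) (a : A) (z : R) : R :=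
  \sum_(s' : S) \sum_(a' : A)
     P s a s' * pi s' a' *
     fine (\int[Rw s a]_(r in setT) (cdfR (eta s' a') ((z - r) / gamma))%:E).

Definition is_fixpoint_T (R : realType) (S A : finType)
  (P : S -> A -> S -> R) (Rw : S -> A -> distr R) (gamma : R)
  (pi : S -> A -> R) (eta : S -> A -> distr R) : Prop :=
  forall s a z, cdfR (eta s a) z = bellman_cdf P Rw gamma pi eta s a z.

Definition is_fixpoint_QT (R : realType) (S A : finType)
  (P : S -> A -> S -> R) (Rw : S -> A -> distr R) (gamma : R)
  (pi : S -> A -> R) (phi : S -> A -> R -> R) (eta : S -> A -> distr R) : Prop :=
  forall s a tau, 0 < tau <= 1 ->
    quantile (cdfR (eta s a)) tau =
    quantile (bellman_cdf P Rw gamma pi eta s a) tau - phi s a tau.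

Definition phi_range (R : realType) (S A : finType) (phi : S -> A -> R -> R) : set R :=
  [set y | exists s a t, 0 <= t <= 1 /\ phi s a t = y].

(* Main.v *)
Require Import Defs.
From HB Require Import structures.
From mathcomp Require Import all_boot all_order all_algebra.
From mathcomp Require Import all_classical all_reals all_analysis.
From mathcomp Require Import ring lra.
Import Order.TTheory GRing.Theory Num.Theory.
Local Open Scope classical_set_scope.
Local Open Scope ring_scope.

Notation Int mu h := (\int[mu]_(r in setT) (h r)%:E)%E.

Section S.
Variable R : realType.

Definition good (F : R -> R) (m : R) :=
  {homo F : x y / x <= y} /\ (forall x, 0 <= F x <= 1) /\
  (forall x, x <= - m -> F x = 0) /\ (forall x, m <= x -> F x = 1).

Lemma good_mono F m m' : m <= m' -> good F m -> good F m'.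
Proof.
move=> mm [h1 [h2 [h3 h4]]]; split => //; split => //; split => x hx.
  by apply: h3; apply: le_trans hx _; rewrite lerN2.
by apply: h4; apply: le_trans hx.
Qed.

Lemma meas01 (nu : distr R) (A : set R) : measurable A ->
  (0 <= nu A)%E /\ (nu A <= 1)%E.
Proof. by move=> mA; split; [exact: measure_ge0|exact: probability_le1]. Qed.

Lemma fine01 (x : \bar R) : (0 <= x)%E -> (x <= 1)%E -> 0 <= fine x <= 1.
Proof.
move=> h0 h1; rewrite fine_ge0 //=.
have : x \is a fin_num by rewrite ge0_fin_numE // (le_lt_trans h1) ?ltry.
by move=> /fineK hx; rewrite -lee_fin hx.
Qed.

Lemma fine_le' (x y : \bar R) : (0 <= x)%E -> (y <= 1)%E -> (x <= y)%E ->
  fine x <= fine y.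
Proof.
move=> h0 h1 hxy; apply: fine_le => //.
  by rewrite ge0_fin_numE // (le_lt_trans (le_trans hxy h1)) ?ltry.
by rewrite ge0_fin_numE ?(le_trans h0 hxy) // (le_lt_trans h1) ?ltry.
Qed.

Lemma cdf_good (nu : distr R) : bounded_support nu -> exists m, good (cdfR nu) m.
Proof.
case=> M hM; exists (`|M| + 1); split; [|split; [|split]].
- move=> x y xy; rewrite /cdfR; apply: fine_le'.
  + exact: measure_ge0.
  + exact: probability_le1.
  + apply: le_measure; rewrite ?inE; try exact: measurable_itv.
    by move=> z /=; rewrite !in_itv /= => /le_trans; apply.
- move=> x; rewrite /cdfR; apply: fine01; [exact: measure_ge0|exact: probability_le1].
- move=> x hx; rewrite /cdfR.
  have hC : nu (~` [set` `[- M, M]]) = 0%E.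
    by rewrite probability_setC ?hM ?subee //; exact: measurable_itv.
  have : (nu [set` `]-oo, x]] <= nu (~` [set` `[(- M)%R, M]]))%E.
    apply: le_measure; rewrite ?inE; try exact: measurable_itv.
      by apply: measurableC; exact: measurable_itv.
    move=> z /=; rewrite !in_itv /= => zx; apply/negP; rewrite negb_and -ltNge.
    apply/orP; left; apply: (le_lt_trans zx); apply: (le_lt_trans hx).
    idtac.
    rewrite ltrN2; apply: (le_lt_trans (ler_norm _)).
    by rewrite ltrDl ltr01.
  rewrite hC => h; have -> : nu [set` `]-oo, x]] = 0%E.
    by apply/eqP; rewrite eq_le h measure_ge0.
  by [].
- move=> x hx; rewrite /cdfR.
  have : (nu [set` `[(- M)%R, M]] <= nu [set` `]-oo, x]])%E.
    apply: le_measure; rewrite ?inE; try exact: measurable_itv.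
    move=> z /=; rewrite !in_itv /= => /andP [_ zM]; apply: (le_trans zM).
    apply: le_trans hx; apply: (le_trans (ler_norm _)); by rewrite lerDl.
  rewrite hM => h; have -> : nu [set` `]-oo, x]] = 1%E.
    by apply/eqP; rewrite eq_le h probability_le1 //; exact: measurable_itv.
  by [].
Qed.


Lemma int01 (mu : distr R) (h : R -> R) : measurable_fun setT h ->
  (forall r, 0 <= h r <= 1) -> (0 <= Int mu h)%E /\ (Int mu h <= 1)%E.
Proof.
move=> mh h01; split.
  by apply: integral_ge0 => r _; rewrite lee_fin; case/andP: (h01 r).
apply: (@le_trans _ _ (\int[mu]_(r in setT) (cst 1%E r))%E).
  apply: ge0_le_integral => //.
  - by move=> r _; rewrite lee_fin; case/andP: (h01 r).
  - by apply/measurable_realfun.measurable_EFinP.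
  - by move=> r _; rewrite lee_fin; case/andP: (h01 r).
by rewrite integral_cst // mul1e probability_le1.
Qed.

Lemma int_le (mu : distr R) (h1 h2 : R -> R) : measurable_fun setT h1 ->
  measurable_fun setT h2 -> (forall r, 0 <= h1 r <= 1) -> (forall r, 0 <= h2 r <= 1) ->
  (forall r, h1 r <= h2 r) -> fine (Int mu h1) <= fine (Int mu h2).
Proof.
move=> m1 m2 b1 b2 le12; apply: fine_le'.
- by case: (int01 mu _ m1 b1).
- by case: (int01 mu _ m2 b2).
apply: ge0_le_integral => //.
- by move=> r _; rewrite lee_fin; case/andP: (b1 r).
- by apply/measurable_realfun.measurable_EFinP.
- by apply/measurable_realfun.measurable_EFinP.
- by move=> r _; rewrite lee_fin.
Qed.

Lemma int_ind_le (mu : distr R) (h : R -> R) (B : set R) : measurable B ->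
  measurable_fun setT h -> (forall r, 0 <= h r) -> (forall r, h r <= \1_B r) ->
  (Int mu h <= mu B)%E.
Proof.
move=> mB mh h0 hB.
have -> : mu B = (\int[mu]_(r in setT) (\1_B r)%:E)%E by rewrite integral_indic // setIT.
apply: ge0_le_integral => //.
- by move=> r _; rewrite lee_fin.
- by apply/measurable_realfun.measurable_EFinP.
- apply/measurable_realfun.measurable_EFinP; exact: measurable_realfun.measurable_indic.
- by move=> r _; rewrite lee_fin.
Qed.

Lemma ind_int_le (mu : distr R) (h : R -> R) (B : set R) : measurable B ->
  measurable_fun setT h -> (forall r, \1_B r <= h r) ->
  (mu B <= Int mu h)%E.
Proof.
move=> mB mh hB.
have -> : mu B = (\int[mu]_(r in setT) (\1_B r)%:E)%E by rewrite integral_indic // setIT.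
apply: ge0_le_integral => //.
- apply/measurable_realfun.measurable_EFinP; exact: measurable_realfun.measurable_indic.
- by apply/measurable_realfun.measurable_EFinP.
- by move=> r _; rewrite lee_fin.
Qed.

Lemma integrand_meas (F : R -> R) (g z : R) : 0 < g -> {homo F : x y / x <= y} ->
  measurable_fun setT (fun r : R => F ((z - r)/g)).
Proof.
move=> g0 hF; apply: measurable_realfun.nonincreasing_measurable => // u v uv.
apply: hF; rewrite ler_pM2r ?invr_gt0 //; by rewrite lerB.
Qed.
End S.
Arguments good {R}.
Arguments int01 {R}.
Arguments int_le {R}.
Arguments int_ind_le {R}.
Arguments ind_int_le {R}.
Arguments integrand_meas {R}.
Arguments fine01 {R}.
Arguments fine_le' {R}.
Arguments cdf_good {R}.

Section T.
Variable R : realType.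
Variables S A : finType.

Lemma sum_weights (P : S -> A -> S -> R) (pi : S -> A -> R) s a (f : S -> A -> R) c :
  (forall s a, \sum_(s' : S) P s a s' = 1) -> (forall s, \sum_(a' : A) pi s a' = 1) ->
  (forall s' a', f s' a' = c) ->
  \sum_(s' : S) \sum_(a' : A) P s a s' * pi s' a' * f s' a' = c.
Proof.
move=> hP hpi hf.
under eq_bigr => s' _ do under eq_bigr => a' _ do rewrite hf -mulrA [pi s' a' * c]mulrC mulrA.
under eq_bigr => s' _ do rewrite -mulr_sumr hpi mulr1.
by rewrite -mulr_suml hP mul1r.
Qed.

Lemma BT_good (P : S -> A -> S -> R) (Rw : S -> A -> distr R) (g : R)
  (pi : S -> A -> R) (eta : S -> A -> distr R) s a (m0 : R) :
  (forall s a s', 0 <= P s a s') -> (forall s a, \sum_(s' : S) P s a s' = 1) ->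
  (forall s a', 0 <= pi s a') -> (forall s, \sum_(a' : A) pi s a' = 1) ->
  bounded_support (Rw s a) -> 0 < g ->
  (forall s' a', good (cdfR (eta s' a')) m0) ->
  exists m, good (bellman_cdf P Rw g pi eta s a) m.
Proof.
move=> hP0 hP1 hpi0 hpi1 [M hM] g0 hg.
exists (g * `|m0| + `|M|).
pose h s' a' z := fun r : R => cdfR (eta s' a') ((z - r)/g).
have hmeas s' a' z : measurable_fun setT (h s' a' z).
  by apply: integrand_meas => //; case: (hg s' a').
have hb s' a' z r : 0 <= h s' a' z r <= 1 by case: (hg s' a') => _ [] hb _; apply: hb.
have hmono s' a' z z' : z <= z' -> fine (Int (Rw s a) (h s' a' z)) <= fine (Int (Rw s a) (h s' a' z')).
  move=> zz; apply: int_le => // r; case: (hg s' a') => hm _; apply: hm.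
  by rewrite ler_pM2r ?invr_gt0 // lerB.
have hI01 s' a' z : 0 <= fine (Int (Rw s a) (h s' a' z)) <= 1.
  by case: (int01 (Rw s a) _ (hmeas s' a' z) (hb s' a' z)); apply: fine01.
have mB : measurable [set` `[(- M)%R, M]] by exact: measurable_itv.
have hMl : M <= `|M| by exact: ler_norm.
have hMr : - M <= `|M| by rewrite -normrN; exact: ler_norm.
have hm0' : - (g * m0) <= g * `|m0|.
  rewrite -mulrN (ler_wpM2l (ltW g0)) //. have := ler_norm (- m0). by rewrite normrN.
have hm0 : g * m0 <= g * `|m0|.
 rewrite (ler_wpM2l (ltW g0)) //; exact: ler_norm.
split; [|split; [|split]].
- move=> z z' zz; rewrite /bellman_cdf; apply: ler_sum => s' _; apply: ler_sum => a' _.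
  by rewrite ler_wpM2l ?mulr_ge0 //; apply: hmono.
- move=> z; rewrite /bellman_cdf; apply/andP; split.
    by apply: sumr_ge0 => s' _; apply: sumr_ge0 => a' _; rewrite !mulr_ge0 //; case/andP: (hI01 s' a' z).
  rewrite -(sum_weights P pi s a (fun _ _ => 1) 1 hP1 hpi1 (fun _ _ => erefl)).
  apply: ler_sum => s' _; apply: ler_sum => a' _.
  by rewrite ler_wpM2l ?mulr_ge0 //; case/andP: (hI01 s' a' z).
- move=> z hz; rewrite /bellman_cdf; apply: (sum_weights P pi s a _ _ hP1 hpi1) => s' a'.
  have : (Int (Rw s a) (h s' a' z) <= Rw s a (~` [set` `[(- M)%R, M]]))%E.
    apply: int_ind_le => //; first by apply: measurableC.
      by move=> r; case/andP: (hb s' a' z r).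
    move=> r; rewrite indicE; case: (boolP (r \in _)) => hr.
      by case/andP: (hb s' a' z r).
    move: hr; rewrite in_setC mem_setE in_itv /= negbK => /andP [hr1 hr2].
    case: (hg s' a') => _ [_ [h0 _]]; rewrite /h h0 //.
    rewrite ler_pdivrMr //; lra.
  rewrite probability_setC // hM subee // => hle.
  have -> : Int (Rw s a) (h s' a' z) = 0%E.
    apply/eqP; rewrite eq_le hle /=.
    by case: (int01 (Rw s a) _ (hmeas s' a' z) (hb s' a' z)).
  by [].
- move=> z hz; rewrite /bellman_cdf; apply: (sum_weights P pi s a _ _ hP1 hpi1) => s' a'.
  have : (Rw s a [set` `[(- M)%R, M]] <= Int (Rw s a) (h s' a' z))%E.
    apply: ind_int_le => //.
    move=> r; rewrite indicE; case: (boolP (r \in _)) => hr; last first.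
      by case/andP: (hb s' a' z r).
    move: hr; rewrite mem_setE in_itv /= => /andP [hr1 hr2].
    case: (hg s' a') => _ [_ [_ h1]]; rewrite /h h1 //.
    rewrite ler_pdivlMr //; lra.
  rewrite hM => hle.
  have -> : Int (Rw s a) (h s' a' z) = 1%E.
    apply/eqP; rewrite eq_le hle andbT.
    by case: (int01 (Rw s a) _ (hmeas s' a' z) (hb s' a' z)).
  by [].
Qed.
End T.

Section Q.
Variable R : realType.
Implicit Types (F : R -> R) (m tau : R).

Lemma q_ne F m tau : good F m -> tau <= 1 -> [set x | tau <= F x] !=set0.
Proof. by case=> _ [_ [_ h1]] t1; exists m => /=; rewrite h1. Qed.
Arguments q_ne {F m tau}.

Lemma q_lb F m tau : good F m -> 0 < tau -> lbound [set x | tau <= F x] (- m).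
Proof.
case=> _ [_ [h0 _]] t0 x /= hx; rewrite leNgt; apply/negP => xm.
by move: hx; rewrite h0 ?(ltW xm) // leNgt t0.
Qed.

Arguments q_lb {F m tau}.

Lemma q_le F m tau x : good F m -> 0 < tau -> tau <= F x -> quantile F tau <= x.
Proof.
move=> hg t0 hx; rewrite /quantile; apply: ge_inf => //.
by exists (- m); apply: q_lb hg t0.
Qed.

Arguments q_le {F m tau x}.

Lemma q_bounds F m tau : good F m -> 0 < tau <= 1 -> - m <= quantile F tau <= m.
Proof.
move=> hg /andP [t0 t1]; apply/andP; split.
  by apply: lb_le_inf; [exact: q_ne hg t1|exact: q_lb hg t0].
apply: (q_le hg t0); by case: hg => _ [_ [_ ->]].
Qed.

Lemma L3 F1 F2 m1 m2 tau c : good F1 m1 -> good F2 m2 -> 0 < tau <= 1 ->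
  (forall x, F1 x <= F2 (x + c)) -> quantile F2 tau - c <= quantile F1 tau.
Proof.
move=> g1 g2 /andP [t0 t1] h; apply: lb_le_inf; first exact: q_ne g1 t1.
move=> x /= hx; rewrite lerBlDr; apply: (q_le g2 t0).
exact: le_trans hx (h x).
Qed.

Lemma L4 F1 F2 m1 m2 c : good F1 m1 -> good F2 m2 ->
  (forall tau, 0 < tau <= 1 -> quantile F1 tau - c <= quantile F2 tau) ->
  forall x e, 0 < e -> F2 x <= F1 (x + c + e).
Proof.
move=> g1 g2 h x e e0.
have [hle|hgt] := leP (F2 x) 0.
  by apply: le_trans hle _; case: g1 => _ [h01 _]; case/andP: (h01 (x + c + e)).
have t1 : F2 x <= 1 by case: g2 => _ [h01 _]; case/andP: (h01 x).
have q2 : quantile F2 (F2 x) <= x by apply: (q_le g2 hgt).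
have q1 : quantile F1 (F2 x) < x + c + e.
  have := h (F2 x); rewrite hgt t1 => /(_ isT) hq.
  rewrite /=; apply: (le_lt_trans _ (_ : x + c < x + c + e)); last by rewrite ltrDl.
  lra.
have [y /= hy yl] := inf_lt (q_ne g1 t1) q1.
apply: le_trans hy _; case: g1 => hm _; apply: hm; exact: ltW.
Qed.
End Q.
Arguments L3 {R F1 F2 m1 m2 tau c}.
Arguments L4 {R F1 F2 m1 m2 c}.
Arguments q_bounds {R F m tau}.

Section Core.
Variable R : realType.
Variables S A : finType.
Variables (P : S -> A -> S -> R) (Rw : S -> A -> distr R) (g : R) (pi : S -> A -> R).
Hypothesis hP0 : forall s a s', 0 <= P s a s'.
Hypothesis hpi0 : forall s a', 0 <= pi s a'.
Hypothesis hg : 0 < g < 1.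

Notation BT := (bellman_cdf P Rw g pi).

Lemma transfer (X Y : S -> A -> distr R) m c :
  (forall s a, good (cdfR (X s a)) m) -> (forall s a, good (cdfR (Y s a)) m) ->
  (forall s a x, cdfR (Y s a) x <= cdfR (X s a) (x + c)) ->
  forall s a z, BT Y s a z <= BT X s a (z + g * c).
Proof.
move=> gX gY h s a z; have g0 : 0 < g by case/andP: hg.
rewrite /bellman_cdf; apply: ler_sum => s' _; apply: ler_sum => a' _.
rewrite ler_wpM2l ?mulr_ge0 //.
apply: int_le.
- by apply: integrand_meas => //; case: (gY s' a').
- by apply: integrand_meas => //; case: (gX s' a').
- by move=> r; case: (gY s' a') => _ [h01 _]; apply: h01.
- by move=> r; case: (gX s' a') => _ [h01 _]; apply: h01.
move=> r; have -> : (z + g * c - r) / g = (z - r) / g + c.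
  by field; rewrite gt_eqF.
exact: h.
Qed.

Lemma core (X Y : S -> A -> distr R) (psiX psiY : S -> A -> R -> R) m K :
  (forall s a, good (cdfR (X s a)) m) -> (forall s a, good (cdfR (Y s a)) m) ->
  (forall s a, good (BT X s a) m) -> (forall s a, good (BT Y s a) m) ->
  (forall s a tau, 0 < tau <= 1 ->
     quantile (cdfR (X s a)) tau = quantile (BT X s a) tau - psiX s a tau) ->
  (forall s a tau, 0 < tau <= 1 ->
     quantile (cdfR (Y s a)) tau = quantile (BT Y s a) tau - psiY s a tau) ->
  (forall s a tau, 0 < tau <= 1 -> psiY s a tau - psiX s a tau <= K) ->
  forall s a tau, 0 < tau <= 1 ->
    quantile (cdfR (X s a)) tau - quantile (cdfR (Y s a)) tau
      <= g / (1 - g) * K + (psiY s a tau - psiX s a tau).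
Proof.
move=> gX gY gBX gBY fX fY hK s0 a0 tau0 ht0.
have g0 : 0 < g by case/andP: hg.
have g1 : g < 1 by case/andP: hg.
pose D := [set t | exists s a tau, 0 < tau <= 1 /\
  t = quantile (cdfR (X s a)) tau - quantile (cdfR (Y s a)) tau].
pose d := sup D.
have Dne : D !=set0 by exists (quantile (cdfR (X s0 a0)) tau0 - quantile (cdfR (Y s0 a0)) tau0); exists s0, a0, tau0.
have Dub : has_ubound D.
  exists (m + m) => t [s [a [tau [ht ->]]]].
  have := q_bounds (gX s a) ht; have := q_bounds (gY s a) ht.
  move=> /andP [h1 h2] /andP [h3 h4]; lra.
have step1 s a tau : 0 < tau <= 1 ->
    quantile (cdfR (X s a)) tau - quantile (cdfR (Y s a)) tau <= d.
  by move=> ht; apply: ub_le_sup => //; exists s, a, tau.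
have step5 e : 0 < e -> forall s a tau, 0 < tau <= 1 ->
    quantile (cdfR (X s a)) tau - quantile (cdfR (Y s a)) tau
      <= g * (d + e) + (psiY s a tau - psiX s a tau).
  move=> e0 s a tau ht.
  have h2 : forall s a x, cdfR (Y s a) x <= cdfR (X s a) (x + (d + e)).
    move=> s' a' x; rewrite addrA; apply: (L4 (gX s' a') (gY s' a')) => // t htt.
    have := step1 s' a' t htt; lra.
  have h3 := transfer X Y m (d + e) gX gY h2.
  have h4 := L3 (gBY s a) (gBX s a) ht (h3 s a).
  rewrite (fX s a tau ht) (fY s a tau ht); lra.
have dle : d * (1 - g) <= K.
  have : d <= g * d + K.
    apply/ler_addgt0Pr => e e0.
    apply: ge_sup => // t [s [a [tau [ht ->]]]].
    have := step5 (e / g) (divr_gt0 e0 g0) s a tau ht.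
    have := hK s a tau ht.
    have -> : g * (d + e / g) = g * d + e by field; rewrite gt_eqF.
    lra.
  lra.
have dle' : g * d <= g / (1 - g) * K.
  have -> : g / (1 - g) * K = g * (K / (1 - g)) by rewrite mulrAC mulrA.
  rewrite (ler_wpM2l (ltW g0)) // ler_pdivlMr ?subr_gt0 //.
apply/ler_addgt0Pr => e e0.
have := step5 (e / g) (divr_gt0 e0 g0) s0 a0 tau0 ht0.
have -> : g * (d + e / g) = g * d + e by field; rewrite gt_eqF.
lra.
Qed.
End Core.

Lemma unif (R : realType) (T : finType) (Q : T -> R -> Prop) :
  (forall i m m', m <= m' -> Q i m -> Q i m') -> (forall i, exists m, Q i m) ->
  exists m, forall i, Q i m.
Proof.
move=> hm hex; have [f hf] := choice hex.
exists (\sum_(i : T) `|f i|) => i; apply: (hm i (f i)) (hf i).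
apply: (le_trans (ler_norm (f i))).
rewrite (bigD1 i) //= lerDl; apply: sumr_ge0 => j _; exact: normr_ge0.
Qed.

Lemma unif2 (R : realType) (S A : finType) (Q : S -> A -> R -> Prop) :
  (forall s a m m', m <= m' -> Q s a m -> Q s a m') -> (forall s a, exists m, Q s a m) ->
  exists m, forall s a, Q s a m.
Proof.
move=> hm hex.
have [m hQ] := @unif R (S * A)%type (fun p m => Q p.1 p.2 m)
  (fun p => hm p.1 p.2) (fun p => hex p.1 p.2).
by exists m => s a; exact: (hQ (s, a)).
Qed.

Theorem theorem3 (R : realType) (S A : finType)
  (P : S -> A -> S -> R) (Rw : S -> A -> distr R) (gamma : R)
  (pi : S -> A -> R) (phi : S -> A -> R -> R)
  (eta eta' : S -> A -> distr R) :
  (forall s a s', 0 <= P s a s') ->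
  (forall s a, \sum_(s' : S) P s a s' = 1) ->
  (forall s a', 0 <= pi s a') ->
  (forall s, \sum_(a' : A) pi s a' = 1) ->
  (forall s a, bounded_support (Rw s a)) ->
  0 < gamma < 1 ->
  (exists C : R, forall s a t, 0 <= t <= 1 -> `|phi s a t| <= C) ->
  (forall s a, bounded_support (eta s a)) ->
  is_fixpoint_T P Rw gamma pi eta ->
  (forall s a, bounded_support (eta' s a)) ->
  is_fixpoint_QT P Rw gamma pi phi eta' ->
  forall s a tau, 0 < tau <= 1 ->
    quantile (cdfR (eta s a)) tau - phi s a tau
      - gamma / (1 - gamma) * sup (phi_range phi)
    <= quantile (cdfR (eta' s a)) tau
    <= quantile (cdfR (eta s a)) tau - phi s a tau
      - gamma / (1 - gamma) * inf (phi_range phi).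
Proof.
move=> hP0 hP1 hpi0 hpi1 hRw hg [C hC] heta hT heta' hQT s a tau ht.
have g0 : 0 < gamma by case/andP: hg.
have gmono : forall (F : R -> R) m m', m <= m' -> good F m -> good F m'.
  by move=> F m m' mm; exact: good_mono mm.
have [m1 h1] := @unif2 R S A _ (fun s a => gmono (cdfR (eta s a))) (fun s a => cdf_good _ (heta s a)).
have [m2 h2] := @unif2 R S A _ (fun s a => gmono (cdfR (eta' s a))) (fun s a => cdf_good _ (heta' s a)).
pose mc := `|m1| + `|m2|.
have hm1 : m1 <= mc by have := ler_norm m1; have := normr_ge0 m2; rewrite /mc; lra.
have hm2 : m2 <= mc by have := ler_norm m2; have := normr_ge0 m1; rewrite /mc; lra.
have h1' s1 a1 : good (cdfR (eta s1 a1)) mc by exact: good_mono hm1 (h1 s1 a1).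
have h2' s1 a1 : good (cdfR (eta' s1 a1)) mc by exact: good_mono hm2 (h2 s1 a1).
have [m3 h3] := @unif2 R S A _ (fun s a => gmono (bellman_cdf P Rw gamma pi eta s a))
  (fun s a => @BT_good R S A P Rw gamma pi eta s a mc hP0 hP1 hpi0 hpi1 (hRw s a) g0 h1').
have [m4 h4] := @unif2 R S A _ (fun s a => gmono (bellman_cdf P Rw gamma pi eta' s a))
  (fun s a => @BT_good R S A P Rw gamma pi eta' s a mc hP0 hP1 hpi0 hpi1 (hRw s a) g0 h2').
pose m := mc + `|m3| + `|m4|.
have n1 := ler_norm m1. have n2 := ler_norm m2. have n3 := ler_norm m3. have n4 := ler_norm m4.
have z1 := normr_ge0 m1. have z2 := normr_ge0 m2. have z3 := normr_ge0 m3. have z4 := normr_ge0 m4.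
have gA s1 a1 : good (cdfR (eta s1 a1)) m by apply: good_mono (h1' s1 a1); rewrite /m /mc; lra.
have gB s1 a1 : good (cdfR (eta' s1 a1)) m by apply: good_mono (h2' s1 a1); rewrite /m /mc; lra.
have gC s1 a1 : good (bellman_cdf P Rw gamma pi eta s1 a1) m by apply: good_mono (h3 s1 a1); rewrite /m /mc; lra.
have gD s1 a1 : good (bellman_cdf P Rw gamma pi eta' s1 a1) m by apply: good_mono (h4 s1 a1); rewrite /m /mc; lra.
have fA s1 a1 tau' : 0 < tau' <= 1 -> quantile (cdfR (eta s1 a1)) tau' =
    quantile (bellman_cdf P Rw gamma pi eta s1 a1) tau' - (fun _ _ _ => 0) s1 a1 tau'.
  move=> _; rewrite subr0; congr quantile; apply/funext => z; exact: hT.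
have fB s1 a1 tau' : 0 < tau' <= 1 -> quantile (cdfR (eta' s1 a1)) tau' =
    quantile (bellman_cdf P Rw gamma pi eta' s1 a1) tau' - phi s1 a1 tau'.
  by move=> ht'; apply: hQT.
have inr s' a' t : 0 < t <= 1 -> phi_range phi (phi s' a' t).
  by case/andP=> t0 t1; exists s', a', t; rewrite (ltW t0) t1.
have hub : has_ubound (phi_range phi).
  exists C => y [s' [a' [t [ht' <-]]]]; apply: le_trans (hC s' a' t ht'); exact: ler_norm.
have hlb : has_lbound (phi_range phi).
  exists (- C) => y [s' [a' [t [ht' <-]]]]; have := hC s' a' t ht'.
  by rewrite ler_norml => /andP [].
have K1 s' a' t : 0 < t <= 1 -> phi s' a' t - (fun _ _ _ => 0) s' a' t <= sup (phi_range phi).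
  by move=> ht'; rewrite subr0; apply: ub_le_sup => //; exact: inr.
have K2 s' a' t : 0 < t <= 1 -> (fun _ _ _ => 0) s' a' t - phi s' a' t <= - inf (phi_range phi).
  by move=> ht'; rewrite sub0r lerN2; apply: ge_inf => //; exact: inr.
have c1 := @core R S A P Rw gamma pi hP0 hpi0 hg eta eta' _ _ m _ gA gB gC gD fA fB K1 s a tau ht.
have c2 := @core R S A P Rw gamma pi hP0 hpi0 hg eta' eta _ _ m _ gB gA gD gC fB fA K2 s a tau ht.
move: c1 c2 => /=; rewrite mulrN.
set u := gamma / (1 - gamma) * sup _; set v := gamma / (1 - gamma) * inf _.
move=> c1 c2; apply/andP; split; lra.
Qed.
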